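(* Let $\mathcal{D}\subset\mathbb{R}^2$ be open and bounded, $\mathcal{K}=\{0,1,2\}$, $\boldsymbol{\phi}=(\phi_0,\phi_1,\phi_2)\in\mathcal{C}^\infty(\mathbb{R}^2,\mathbb{R}^3)$ with $\phi_0\equiv0$. Let $\hat x\in\mathcal{E}_{\mathcal{K}}(\boldsymbol{\phi})$ and assume $D\widehat{\boldsymbol{\phi}}_{\mathcal{K}}(\hat x)$ is invertible. Then for all $k\in\mathcal{K}$, $$\beta_k=\arccos\frac{\nabla(\phi_{[k+1]_3}-\phi_k)\cdot\nabla(\phi_k-\phi_{[k+2]_3})}{|\nabla(\phi_{[k+1]_3}-\phi_k)|\,|\nabla(\phi_k-\phi_{[k+2]_3})|},$$ with gradients evaluated at $\hat x$, where $[j]_3$ denotes $j$ modulo $3$.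
   Context: For $j\in\mathcal{K}$, $\Omega_j(\boldsymbol{\phi})=\operatorname{int}\{x\in\mathcal{D}\mid\phi_j(x)\le\phi_m(x)\ \forall m\ne j\}$; for $\mathcal{I}\subset\mathcal{K}$, $\mathcal{E}_{\mathcal{I}}(\boldsymbol{\phi})=\bigcap_{j\in\mathcal{I}}\partial\Omega_j(\boldsymbol{\phi})$; $\widehat{\boldsymbol{\phi}}_{\mathcal{K}}=(\phi_0-\phi_1,\phi_0-\phi_2)$. For $\mathcal{I}\in\{\{0,1\},\{1,2\},\{0,2\}\}$, $\mathbb{D}_{\mathcal{I}}$ denotes the half-tangent to the curve $\mathcal{E}_{\mathcal{I}}(\boldsymbol{\phi})$ at $\hat x$. In polar coordinates centered at $\hat x$ with angle $\vartheta\in[0,2\pi]$, $\vartheta=0$ along $\mathbb{D}_{\{0,2\}}$, let $\vartheta_0$ be the angle of $\mathbb{D}_{\{0,1\}}$ and $\vartheta_1$ that of $\mathbb{D}_{\{1,2\}}$, labels of $\phi_0,\phi_2$ being exchanged if necessary so that $\vartheta_0\le\vartheta_1$; then $\beta_0=\vartheta_0$, $\beta_1=\vartheta_1-\vartheta_0$, $\beta_2=2\pi-\vartheta_1$. *)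

(* Defs.v *)
From Stdlib Require Import Reals List.
From Coquelicot Require Import Coquelicot.
Open Scope R_scope.

Definition pt := (R * R)%type.

Definition dot (a b : pt) : R := fst a * fst b + snd a * snd b.
Definition cross (a b : pt) : R := fst a * snd b - snd a * fst b.
Definition vnorm (a : pt) : R := sqrt (dot a a).
Definition vsub (a b : pt) : pt := (fst a - fst b, snd a - snd b).
Definition vscale (c : R) (a : pt) : pt := (c * fst a, c * snd a).
Definition dist2 (a b : pt) : R := vnorm (vsub a b).

Definition interior (S : pt -> Prop) (x : pt) : Prop :=
  exists e, 0 < e /\ forall y, dist2 y x < e -> S y.
Definition closure (S : pt -> Prop) (x : pt) : Prop :=
  forall e, 0 < e -> exists y, S y /\ dist2 y x < e.
Definition boundary (S : pt -> Prop) (x : pt) : Prop :=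
  closure S x /\ ~ interior S x.
Definition is_open (S : pt -> Prop) : Prop := forall x, S x -> interior S x.
Definition is_bounded (S : pt -> Prop) : Prop :=
  exists M, forall x, S x -> vnorm x <= M.

Definition cont2 (f : pt -> R) : Prop :=
  forall x e, 0 < e -> exists d, 0 < d /\
    forall y, dist2 y x < d -> Rabs (f y - f x) < e.
Definition is_partial1 (f g : pt -> R) : Prop :=
  forall x y, derivable_pt_lim (fun t => f (t, y)) x (g (x, y)).
Definition is_partial2 (f g : pt -> R) : Prop :=
  forall x y, derivable_pt_lim (fun t => f (x, t)) y (g (x, y)).
Fixpoint Ck (n : nat) (f : pt -> R) : Prop :=
  match n with
  | O => cont2 f
  | S n => cont2 f /\ exists g1 g2, is_partial1 f g1 /\ is_partial2 f g2 /\
                                    Ck n g1 /\ Ck n g2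
  end.
Definition smooth (f : pt -> R) : Prop := forall n, Ck n f.

Definition grad (f : pt -> R) (x : pt) : pt :=
  (Derive (fun t => f (t, snd x)) (fst x), Derive (fun t => f (fst x, t)) (snd x)).

Definition phidiff (phi : nat -> pt -> R) (a b : nat) : pt -> R :=
  fun p => phi a p - phi b p.

Definition Omega (D : pt -> Prop) (phi : nat -> pt -> R) (j : nat) : pt -> Prop :=
  interior (fun x => D x /\ forall m, (m < 3)%nat -> m <> j -> phi j x <= phi m x).

Definition E (D : pt -> Prop) (phi : nat -> pt -> R) (I : list nat) : pt -> Prop :=
  fun x => forall j, In j I -> boundary (Omega D phi j) x.

Definition is_half_tangent (S : pt -> Prop) (x d : pt) : Prop :=
  vnorm d = 1 /\
  (forall e, 0 < e -> exists y, S y /\ 0 < dist2 y x < e) /\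
  (forall e, 0 < e -> exists del, 0 < del /\
     forall y, S y -> 0 < dist2 y x < del ->
       dist2 (vscale (/ dist2 y x) (vsub y x)) d < e).

Definition ccw_angle (a d : pt) (th : R) : Prop :=
  0 <= th < 2 * PI /\ cos th = dot a d /\ sin th = cross a d.

(** beta_k from the angles th0 (of D_{01}) and th1 (of D_{12}), both measured from
    D_{02}.  If th0 <= th1 this is the paper's definition verbatim; otherwise the
    paper exchanges the labels of phi_0 and phi_2, and we translate the resulting
    angles back to the original labels (beta_k = opening angle of Omega_k). *)
Definition beta (th0 th1 : R) (k : nat) : R :=
  if Rle_dec th0 th1 then
    match k with O => th0 | 1%nat => th1 - th0 | _ => 2 * PI - th1 end
  else
    match k with O => 2 * PI - th0 | 1%nat => th0 - th1 | _ => th1 end.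

Definition angle_formula (phi : nat -> pt -> R) (x : pt) (k : nat) : R :=
  let u := grad (phidiff phi ((k + 1) mod 3) k) x in
  let v := grad (phidiff phi k ((k + 2) mod 3)) x in
  acos (dot u v / (vnorm u * vnorm v)).

(* Main.v *)
Require Import Defs.
From Stdlib Require Import Reals List.
From Coquelicot Require Import Coquelicot.
From Stdlib Require Import Lra Psatz Lia.
Open Scope R_scope.

Lemma dot_self_ge0 v : 0 <= dot v v.
Proof. unfold dot; nra. Qed.

Lemma vnorm_ge0 v : 0 <= vnorm v.
Proof. unfold vnorm; apply sqrt_pos. Qed.

Lemma vnorm_sq v : vnorm v * vnorm v = dot v v.
Proof. unfold vnorm; apply sqrt_sqrt, dot_self_ge0. Qed.

Lemma abs_le_sq a n : 0 <= n -> a * a <= n * n -> Rabs a <= n.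
Proof. intros; apply Rabs_le; split; nra. Qed.

Lemma comp1_le v : Rabs (fst v) <= vnorm v.
Proof.
  pose proof (vnorm_ge0 v). pose proof (vnorm_sq v).
  unfold dot in *. apply abs_le_sq; nra.
Qed.

Lemma comp2_le v : Rabs (snd v) <= vnorm v.
Proof.
  pose proof (vnorm_ge0 v). pose proof (vnorm_sq v).
  unfold dot in *. apply abs_le_sq; nra.
Qed.

Lemma vnorm_le_n1 v : vnorm v <= Rabs (fst v) + Rabs (snd v).
Proof.
  pose proof (vnorm_ge0 v). pose proof (vnorm_sq v).
  pose proof (Rabs_pos (fst v)). pose proof (Rabs_pos (snd v)).
  unfold dot in *.
  assert (fst v * fst v = Rabs (fst v) * Rabs (fst v)) by (rewrite <- Rabs_mult; rewrite Rabs_pos_eq; nra).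
  assert (snd v * snd v = Rabs (snd v) * Rabs (snd v)) by (rewrite <- Rabs_mult; rewrite Rabs_pos_eq; nra).
  nra.
Qed.

Lemma vnorm_eq1 v : vnorm v = 1 -> dot v v = 1.
Proof. intro H. rewrite <- vnorm_sq, H. ring. Qed.

Lemma vnorm_pos v : v <> (0,0) -> 0 < vnorm v.
Proof.
  intro H. destruct (vnorm_ge0 v) as [h|h]; auto.
  exfalso. apply H. pose proof (comp1_le v). pose proof (comp2_le v).
  rewrite <- h in *. destruct v as [v1 v2]; simpl in *.
  f_equal; apply Rabs_eq_0; pose proof (Rabs_pos v1); pose proof (Rabs_pos v2); lra.
Qed.

Lemma vnorm_0 : vnorm (0,0) = 0.
Proof. unfold vnorm, dot; simpl. replace (0*0+0*0) with 0 by ring. apply sqrt_0. Qed.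

Lemma dist_self z : dist2 z z = 0.
Proof. unfold dist2, vsub. rewrite !Rminus_diag. apply vnorm_0. Qed.

Lemma dot_le l v : Rabs (dot l v) <= (Rabs (fst l) + Rabs (snd l)) * vnorm v.
Proof.
  unfold dot. pose proof (comp1_le v). pose proof (comp2_le v).
  eapply Rle_trans. apply Rabs_triang. rewrite !Rabs_mult.
  pose proof (Rabs_pos (fst l)). pose proof (Rabs_pos (snd l)). nra.
Qed.

Definition box (x : pt) d (p : pt) := Rabs (fst p - fst x) < d /\ Rabs (snd p - snd x) < d.
Definition n1 (v : pt) := Rabs (fst v) + Rabs (snd v).

Lemma dist_box x p d : dist2 p x < d -> box x d p.
Proof.
  unfold dist2, box; intro H. pose proof (comp1_le (vsub p x)). pose proof (comp2_le (vsub p x)).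
  unfold vsub in *; simpl in *. lra.
Qed.

Lemma box_dist x p d : box x d p -> dist2 p x < 2 * d.
Proof.
  unfold dist2, box; intro H. pose proof (vnorm_le_n1 (vsub p x)).
  unfold vsub in *; simpl in *. lra.
Qed.

Lemma box_self x d : 0 < d -> box x d x.
Proof. unfold box; rewrite !Rminus_diag, Rabs_R0; lra. Qed.

Lemma n1_le2 v : n1 v <= 2 * vnorm v.
Proof. unfold n1. pose proof (comp1_le v). pose proof (comp2_le v). lra. Qed.

Lemma small_zero r : (forall eta, 0 < eta -> Rabs r <= eta) -> r = 0.
Proof.
  intro H. destruct (Req_dec r 0) as [h|h]; auto.
  pose proof (Rabs_pos_lt r h). specialize (H (Rabs r / 2)). lra.
Qed.


Definition ulin (f : pt -> R) (x l : pt) : Prop :=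
  forall eps, 0 < eps -> exists del, 0 < del /\
    forall p q, box x del p -> box x del q ->
      Rabs (f q - f p - dot l (vsub q p)) <= eps * n1 (vsub q p).

Lemma between_box a b c x d :
  Rmin a b <= c <= Rmax a b -> Rabs (a - x) < d -> Rabs (b - x) < d -> Rabs (c - x) < d.
Proof.
  unfold Rmin, Rmax; destruct (Rle_dec a b); intros [h1 h2] ha hb;
  apply Rabs_def2 in ha; apply Rabs_def2 in hb; apply Rabs_def1; lra.
Qed.

Lemma mvt1 (h dh : R -> R) a b :
  (forall t, derivable_pt_lim h t (dh t)) ->
  exists c, Rmin a b <= c <= Rmax a b /\ h b - h a = dh c * (b - a).
Proof.
  intro H. apply (MVT_gen h a b dh).
  - intros t _. apply is_derive_Reals. apply H.
  - intros t _. apply derivable_continuous_pt. exists (dh t). apply H.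
Qed.

Lemma ulin_of_C1 f g1 g2 x :
  is_partial1 f g1 -> is_partial2 f g2 -> cont2 g1 -> cont2 g2 -> ulin f x (g1 x, g2 x).
Proof.
  intros P1 P2 C1 C2 eps Heps.
  destruct (C1 x eps Heps) as [d1 [Hd1 H1]].
  destruct (C2 x eps Heps) as [d2 [Hd2 H2]].
  exists (Rmin d1 d2 / 2). split.
  { assert (0 < Rmin d1 d2) by (apply Rmin_glb_lt; auto). lra. }
  assert (Hm1 := Rmin_l d1 d2). assert (Hm2 := Rmin_r d1 d2).
  intros [p1 p2] [q1 q2] [Hp1 Hp2] [Hq1 Hq2]. destruct x as [x1 x2]. simpl in *.
  destruct (mvt1 (fun t => f (t, q2)) (fun t => g1 (t, q2)) p1 q1) as [c1 [Hc1 E1]].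
  { intro t. apply (P1 t q2). }
  destruct (mvt1 (fun t => f (p1, t)) (fun t => g2 (p1, t)) p2 q2) as [c2 [Hc2 E2]].
  { intro t. apply (P2 p1 t). }
  simpl in E1, E2.
  assert (B1 : Rabs (c1 - x1) < Rmin d1 d2 / 2) by (eapply between_box; eauto).
  assert (B2 : Rabs (c2 - x2) < Rmin d1 d2 / 2) by (eapply between_box; eauto).
  assert (G1 : Rabs (g1 (c1, q2) - g1 (x1, x2)) < eps).
  { apply H1. assert (dist2 (c1, q2) (x1, x2) < 2 * (Rmin d1 d2 / 2)).
    apply box_dist. split; simpl; auto. lra. }
  assert (G2 : Rabs (g2 (p1, c2) - g2 (x1, x2)) < eps).
  { apply H2. assert (dist2 (p1, c2) (x1, x2) < 2 * (Rmin d1 d2 / 2)).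
    apply box_dist. split; simpl; auto. lra. }
  unfold dot, vsub, n1; simpl.
  replace (f (q1, q2) - f (p1, p2) - (g1 (x1, x2) * (q1 - p1) + g2 (x1, x2) * (q2 - p2)))
    with ((g1 (c1, q2) - g1 (x1, x2)) * (q1 - p1) + (g2 (p1, c2) - g2 (x1, x2)) * (q2 - p2)) by lra.
  eapply Rle_trans. apply Rabs_triang. rewrite !Rabs_mult.
  pose proof (Rabs_pos (q1 - p1)). pose proof (Rabs_pos (q2 - p2)). nra.
Qed.

Lemma ulin_sub f g x l m :
  ulin f x l -> ulin g x m -> ulin (fun p => f p - g p) x (vsub l m).
Proof.
  intros Hf Hg eps Heps.
  destruct (Hf (eps/2)) as [d1 [Hd1 H1]]; [lra|].
  destruct (Hg (eps/2)) as [d2 [Hd2 H2]]; [lra|].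
  exists (Rmin d1 d2). split. { apply Rmin_glb_lt; auto. }
  assert (Hm1 := Rmin_l d1 d2). assert (Hm2 := Rmin_r d1 d2).
  intros p q [Hp1 Hp2] [Hq1 Hq2].
  assert (A1 := H1 p q (conj (Rlt_le_trans _ _ _ Hp1 Hm1) (Rlt_le_trans _ _ _ Hp2 Hm1))
                     (conj (Rlt_le_trans _ _ _ Hq1 Hm1) (Rlt_le_trans _ _ _ Hq2 Hm1))).
  assert (A2 := H2 p q (conj (Rlt_le_trans _ _ _ Hp1 Hm2) (Rlt_le_trans _ _ _ Hp2 Hm2))
                     (conj (Rlt_le_trans _ _ _ Hq1 Hm2) (Rlt_le_trans _ _ _ Hq2 Hm2))).
  replace (f q - g q - (f p - g p) - dot (vsub l m) (vsub q p))
    with ((f q - f p - dot l (vsub q p)) - (g q - g p - dot m (vsub q p)))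
    by (unfold dot, vsub; simpl; ring).
  eapply Rle_trans. apply Rabs_triang. rewrite Rabs_Ropp. lra.
Qed.

Lemma ulin_grad f x l : ulin f x l -> grad f x = l.
Proof.
  intro H. destruct x as [x1 x2]. destruct l as [l1 l2]. unfold grad; simpl.
  f_equal; apply is_derive_unique; apply is_derive_Reals; intros eps Heps;
  destruct (H (eps/2)) as [d [Hd Hb]]; try lra;
  exists (mkposreal d Hd); intros h Hh0 Hhd; simpl in Hhd.
  - specialize (Hb (x1, x2) (x1 + h, x2) (box_self _ _ Hd)).
    assert (box (x1, x2) d (x1 + h, x2)).
    { unfold box; simpl. replace (x1 + h - x1) with h by ring. rewrite Rminus_diag, Rabs_R0. lra. }
    specialize (Hb H0). unfold dot, vsub, n1 in Hb; simpl in Hb.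
    replace (x1 + h - x1) with h in Hb by ring. rewrite Rminus_diag, Rabs_R0 in Hb.
    replace ((f (x1 + h, x2) - f (x1, x2)) / h - l1)
      with ((f (x1 + h, x2) - f (x1, x2) - (l1 * h + l2 * 0)) / h) by (field; auto).
    unfold Rdiv. rewrite Rabs_mult, Rabs_inv. pose proof (Rabs_pos_lt h Hh0).
    apply (Rmult_lt_reg_r (Rabs h)); auto. rewrite Rmult_assoc, Rinv_l by lra. nra.
  - specialize (Hb (x1, x2) (x1, x2 + h) (box_self _ _ Hd)).
    assert (box (x1, x2) d (x1, x2 + h)).
    { unfold box; simpl. replace (x2 + h - x2) with h by ring. rewrite Rminus_diag, Rabs_R0. lra. }
    specialize (Hb H0). unfold dot, vsub, n1 in Hb; simpl in Hb.
    replace (x2 + h - x2) with h in Hb by ring. rewrite Rminus_diag, Rabs_R0 in Hb.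
    replace ((f (x1, x2 + h) - f (x1, x2)) / h - l2)
      with ((f (x1, x2 + h) - f (x1, x2) - (l1 * 0 + l2 * h)) / h) by (field; auto).
    unfold Rdiv. rewrite Rabs_mult, Rabs_inv. pose proof (Rabs_pos_lt h Hh0).
    apply (Rmult_lt_reg_r (Rabs h)); auto. rewrite Rmult_assoc, Rinv_l by lra. nra.
Qed.

Lemma cont2_sub f g : cont2 f -> cont2 g -> cont2 (fun p => f p - g p).
Proof.
  intros Hf Hg x e He.
  destruct (Hf x (e/2)) as [d1 [Hd1 H1]]; [lra|].
  destruct (Hg x (e/2)) as [d2 [Hd2 H2]]; [lra|].
  exists (Rmin d1 d2). split. { apply Rmin_glb_lt; auto. }
  intros y Hy. assert (A1 := H1 y (Rlt_le_trans _ _ _ Hy (Rmin_l _ _))).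
  assert (A2 := H2 y (Rlt_le_trans _ _ _ Hy (Rmin_r _ _))).
  replace (f y - g y - (f x - g x)) with ((f y - f x) - (g y - g x)) by ring.
  eapply Rle_lt_trans. apply Rabs_triang. rewrite Rabs_Ropp. lra.
Qed.

Lemma cont2_line f c1 c2 v1 v2 : cont2 f -> continuity (fun s => f (c1 + s * v1, c2 + s * v2)).
Proof.
  intros Hf s0. unfold continuity_pt, continue_in, limit1_in, limit_in. simpl.
  intros eps Heps. destruct (Hf (c1 + s0 * v1, c2 + s0 * v2) eps Heps) as [d [Hd H]].
  exists (d / (Rabs v1 + Rabs v2 + 1)).
  pose proof (Rabs_pos v1). pose proof (Rabs_pos v2).
  split. { apply Rdiv_lt_0_compat; lra. }
  intros s [_ Hs]. unfold R_dist in *. apply H.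
  eapply Rle_lt_trans. apply vnorm_le_n1. unfold vsub; simpl.
  replace (c1 + s * v1 - (c1 + s0 * v1)) with ((s - s0) * v1) by ring.
  replace (c2 + s * v2 - (c2 + s0 * v2)) with ((s - s0) * v2) by ring.
  rewrite !Rabs_mult. pose proof (Rabs_pos (s - s0)).
  apply (Rmult_lt_compat_r (Rabs v1 + Rabs v2 + 1)) in Hs; [|lra].
  unfold Rdiv in Hs. rewrite Rmult_assoc, Rinv_l in Hs by lra. nra.
Qed.


Lemma closure_le D phi j m y :
  (forall k, (k < 3)%nat -> cont2 (phi k)) -> (j < 3)%nat -> (m < 3)%nat ->
  closure (Omega D phi j) y -> phi j y <= phi m y.
Proof.
  intros HC Hj Hm Hcl. destruct (Nat.eq_dec m j) as [->|Hne]; [lra|].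
  destruct (Rle_lt_dec (phi j y) (phi m y)) as [h|h]; auto. exfalso.
  destruct (cont2_sub _ _ (HC m Hm) (HC j Hj) y (phi j y - phi m y)) as [r [Hr Hc]]; [lra|].
  destruct (Hcl r Hr) as [z [Hz Hzy]].
  destruct Hz as [e [He Hz]]. specialize (Hz z). rewrite dist_self in Hz.
  destruct (Hz He) as [_ Hz']. specialize (Hz' m Hm Hne).
  specialize (Hc z Hzy). apply Rabs_def2 in Hc. lra.
Qed.

Lemma strict_Omega D phi j z :
  (forall k, (k < 3)%nat -> cont2 (phi k)) -> (j < 3)%nat -> is_open D -> D z ->
  (forall m, (m < 3)%nat -> m <> j -> phi j z < phi m z) -> Omega D phi j z.
Proof.
  intros HC Hj HD Dz Hs.
  assert (R3 : forall m, (m < 3)%nat -> exists r, 0 < r /\ forall w, dist2 w z < r ->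
            (m <> j -> phi j w <= phi m w)).
  { intros m Hm. destruct (Nat.eq_dec m j) as [->|Hne].
    - exists 1. split; [lra|]. intros; congruence.
    - specialize (Hs m Hm Hne).
      destruct (cont2_sub _ _ (HC m Hm) (HC j Hj) z (phi m z - phi j z)) as [r [Hr Hc]]; [lra|].
      exists r. split; auto. intros w Hw _. specialize (Hc w Hw). apply Rabs_def2 in Hc. lra. }
  destruct (R3 0%nat ltac:(lia)) as [r0 [Hr0 H0]].
  destruct (R3 1%nat ltac:(lia)) as [r1 [Hr1 H1]].
  destruct (R3 2%nat ltac:(lia)) as [r2 [Hr2 H2]].
  destruct (HD z Dz) as [e [He HDz]].
  exists (Rmin e (Rmin r0 (Rmin r1 r2))). split.
  { repeat apply Rmin_glb_lt; auto. }
  intros w Hw.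
  assert (Hw0 : dist2 w z < e) by (eapply Rlt_le_trans; [apply Hw|]; apply Rmin_l).
  assert (Hw' : dist2 w z < Rmin r0 (Rmin r1 r2)) by (eapply Rlt_le_trans; [apply Hw|]; apply Rmin_r).
  assert (Hwa : dist2 w z < r0) by (eapply Rlt_le_trans; [apply Hw'|]; apply Rmin_l).
  assert (Hw'' : dist2 w z < Rmin r1 r2) by (eapply Rlt_le_trans; [apply Hw'|]; apply Rmin_r).
  assert (Hwb : dist2 w z < r1) by (eapply Rlt_le_trans; [apply Hw''|]; apply Rmin_l).
  assert (Hwc : dist2 w z < r2) by (eapply Rlt_le_trans; [apply Hw''|]; apply Rmin_r).
  split; [apply HDz; auto|].
  intros m Hm Hne. destruct m as [|[|[|m]]]; [apply H0|apply H1|apply H2|lia]; auto.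
Qed.

Lemma bdry_of D phi j y :
  (j < 3)%nat ->
  (forall e, 0 < e -> exists z, dist2 z y < e /\ Omega D phi j z) ->
  (forall e, 0 < e -> exists z, dist2 z y < e /\ exists m, (m < 3)%nat /\ phi m z < phi j z) ->
  boundary (Omega D phi j) y.
Proof.
  intros Hj H1 H2. split.
  - intros e He. destruct (H1 e He) as [z [Hz1 Hz2]]. exists z; auto.
  - intros [e [He Hi]]. destruct (H2 e He) as [z [Hz [m [Hm Hlt]]]].
    destruct (Hi z Hz) as [e' [He' Hz']]. specialize (Hz' z). rewrite dist_self in Hz'.
    destruct (Hz' He') as [_ HA].
    destruct (Nat.eq_dec m j) as [->|Hne]; [lra|].
    specialize (HA m Hm Hne). lra.
Qed.

Definition sc (a b : pt -> R) (y : pt) : Prop :=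
  forall e, 0 < e -> exists zp zm, dist2 zp y < e /\ dist2 zm y < e /\
    0 < a zp /\ a zm < 0 /\ 0 < b zp /\ 0 < b zm.

Lemma E_pair D phi i j a b :
  is_open D -> (forall k, (k < 3)%nat -> cont2 (phi k)) -> (i < 3)%nat -> (j < 3)%nat ->
  (forall z, 0 < a z -> 0 < b z -> forall m, (m < 3)%nat -> m <> i -> phi i z < phi m z) ->
  (forall z, a z < 0 -> 0 < b z -> forall m, (m < 3)%nat -> m <> j -> phi j z < phi m z) ->
  (forall z, a z < 0 -> phi j z < phi i z) ->
  (forall z, 0 < a z -> phi i z < phi j z) ->
  forall y, D y -> sc a b y -> E D phi (i :: j :: nil)%nat y.
Proof.
  intros HD HC Hi Hj Si Sj Ni Nj y Dy Hsc k Hk.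
  destruct (HD y Dy) as [r [Hr HDy]].
  destruct Hk as [<-|[<-|[]]]; apply bdry_of; auto.
  - intros e He. destruct (Hsc (Rmin e r)) as [zp [zm [H1 [H2 [H3 [H4 [H5 H6]]]]]]].
    { apply Rmin_glb_lt; auto. }
    exists zp. split. { eapply Rlt_le_trans; [apply H1|apply Rmin_l]. }
    apply strict_Omega; auto. apply HDy. eapply Rlt_le_trans; [apply H1|apply Rmin_r].
  - intros e He. destruct (Hsc e He) as [zp [zm [H1 [H2 [H3 [H4 [H5 H6]]]]]]].
    exists zm. split; auto. exists j. auto.
  - intros e He. destruct (Hsc (Rmin e r)) as [zp [zm [H1 [H2 [H3 [H4 [H5 H6]]]]]]].
    { apply Rmin_glb_lt; auto. }
    exists zm. split. { eapply Rlt_le_trans; [apply H2|apply Rmin_l]. }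
    apply strict_Omega; auto. apply HDy. eapply Rlt_le_trans; [apply H2|apply Rmin_r].
  - intros e He. destruct (Hsc e He) as [zp [zm [H1 [H2 [H3 [H4 [H5 H6]]]]]]].
    exists zp. split; auto. exists i. auto.
Qed.


Definition Pab (x w n : pt) (al be : R) : pt :=
  (fst x + al * fst w + be * fst n, snd x + al * snd w + be * snd n).

Lemma vsub_Pab x w n a b a' b' :
  vsub (Pab x w n a b) (Pab x w n a' b') = ((a - a') * fst w + (b - b') * fst n, (a - a') * snd w + (b - b') * snd n).
Proof. unfold vsub, Pab; simpl; f_equal; ring. Qed.

Lemma n1_Pab x w n a b a' b' :
  n1 (vsub (Pab x w n a b) (Pab x w n a' b')) <= Rabs (a - a') * n1 w + Rabs (b - b') * n1 n.
Proof.
  rewrite vsub_Pab. unfold n1; simpl.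
  pose proof (Rabs_triang ((a - a') * fst w) ((b - b') * fst n)).
  pose proof (Rabs_triang ((a - a') * snd w) ((b - b') * snd n)).
  rewrite !Rabs_mult in *. lra.
Qed.

Lemma Pab00 x w n : Pab x w n 0 0 = x.
Proof. destruct x; unfold Pab; simpl; f_equal; ring. Qed.

Lemma box_Pab x w n a b K d :
  Rabs a <= K -> Rabs b <= K -> K * (n1 w + n1 n) < d -> box x d (Pab x w n a b).
Proof.
  intros Ha Hb HK. unfold box, Pab, n1 in *; simpl.
  pose proof (Rabs_pos (fst w)). pose proof (Rabs_pos (snd w)).
  pose proof (Rabs_pos (fst n)). pose proof (Rabs_pos (snd n)).
  replace (fst x + a * fst w + b * fst n - fst x) with (a * fst w + b * fst n) by ring.
  replace (snd x + a * snd w + b * snd n - snd x) with (a * snd w + b * snd n) by ring.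
  pose proof (Rabs_triang (a * fst w) (b * fst n)).
  pose proof (Rabs_triang (a * snd w) (b * snd n)).
  rewrite !Rabs_mult in *.
  assert (Rabs a * Rabs (fst w) <= K * Rabs (fst w)) by (apply Rmult_le_compat_r; auto).
  assert (Rabs a * Rabs (snd w) <= K * Rabs (snd w)) by (apply Rmult_le_compat_r; auto).
  assert (Rabs b * Rabs (fst n) <= K * Rabs (fst n)) by (apply Rmult_le_compat_r; auto).
  assert (Rabs b * Rabs (snd n) <= K * Rabs (snd n)) by (apply Rmult_le_compat_r; auto).
  assert (K * Rabs (fst w) + K * Rabs (fst n) <= K * (Rabs (fst w) + Rabs (snd w) + (Rabs (fst n) + Rabs (snd n)))).
  { assert (0 <= K) by (pose proof (Rabs_pos a); lra). nra. }
  assert (K * Rabs (snd w) + K * Rabs (snd n) <= K * (Rabs (fst w) + Rabs (snd w) + (Rabs (fst n) + Rabs (snd n)))).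
  { assert (0 <= K) by (pose proof (Rabs_pos a); lra). nra. }
  split; lra.
Qed.

Lemma est_Pab f l x w n eps del a b a' b' :
  (forall p q, box x del p -> box x del q ->
      Rabs (f q - f p - dot l (vsub q p)) <= eps * n1 (vsub q p)) ->
  0 <= eps ->
  box x del (Pab x w n a b) -> box x del (Pab x w n a' b') ->
  Rabs (f (Pab x w n a b) - f (Pab x w n a' b') - ((a - a') * dot l w + (b - b') * dot l n))
    <= eps * (Rabs (a - a') * n1 w + Rabs (b - b') * n1 n).
Proof.
  intros H He B1 B2. specialize (H _ _ B2 B1).
  assert (E : dot l (vsub (Pab x w n a b) (Pab x w n a' b')) = (a - a') * dot l w + (b - b') * dot l n).
  { rewrite vsub_Pab. unfold dot; simpl; ring. }
  rewrite E in H. eapply Rle_trans; [apply H|]. apply Rmult_le_compat_l; auto. apply n1_Pab.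
Qed.

Lemma n1_ge0 v : 0 <= n1 v.
Proof. unfold n1. pose proof (Rabs_pos (fst v)); pose proof (Rabs_pos (snd v)); lra. Qed.

Lemma aux_le eps A B nw nn : 0 <= eps -> 0 <= A -> 0 <= B -> 0 <= nw -> 0 <= nn ->
  eps * (A * nw + B * nn) <= eps * (nn + nw + 1) * (A + B).
Proof. intros. assert (A * nw + B * nn <= (nn + nw + 1) * (A + B)) by nra. nra. Qed.

Lemma curve_pts a b x la lb :
  cont2 a -> ulin a x la -> ulin b x lb -> a x = 0 -> b x = 0 -> cross la lb <> 0 ->
  forall e, 0 < e -> exists y, 0 < dist2 y x < e /\ sc a b y.
Proof.
  intros Ca Ua Ub ax bx HD e He.
  set (De := cross la lb) in *.
  set (n := (snd lb / De, - fst lb / De)).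
  set (w := (- snd la / De, fst la / De)).
  assert (Ln : dot la n = 1) by (unfold dot, n, De, cross; simpl; field; auto).
  assert (Mn : dot lb n = 0) by (unfold dot, n, De, cross; simpl; field; auto).
  assert (Lw : dot la w = 0) by (unfold dot, w, De, cross; simpl; field; auto).
  assert (Mw : dot lb w = 1) by (unfold dot, w, De, cross; simpl; field; auto).
  set (N := n1 n + n1 w + 1).
  assert (Nn := n1_ge0 n). assert (Nw := n1_ge0 w).
  assert (HN : 0 < N) by (unfold N; lra).
  set (eps := / (8 * N)).
  assert (Heps : 0 < eps) by (unfold eps; apply Rinv_0_lt_compat; lra).
  assert (HepsN : eps * N = / 8) by (unfold eps; field; lra).
  destruct (Ua eps Heps) as [da [Hda Ha]].
  destruct (Ub eps Heps) as [db [Hdb Hb]].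
  set (m := Rmin (Rmin da db) e).
  assert (Hm : 0 < m) by (unfold m; repeat apply Rmin_glb_lt; auto).
  assert (Hma : m <= da) by (unfold m; eapply Rle_trans; apply Rmin_l).
  assert (Hmb : m <= db) by (unfold m; eapply Rle_trans; [apply Rmin_l|apply Rmin_r]).
  assert (Hme : m <= e) by (unfold m; apply Rmin_r).
  set (t := m / (4 * N)).
  assert (Ht : 0 < t) by (unfold t; apply Rdiv_lt_0_compat; lra).
  assert (HtN : t * N = m / 4) by (unfold t; field; lra).
  set (P := Pab x w n).
  assert (BX : forall al be d, Rabs al <= 2 * t -> Rabs be <= 2 * t -> m <= d -> box x d (P al be)).
  { intros al be d H1 H2 H3. apply (box_Pab _ _ _ _ _ (2 * t)); auto.
    assert (t * (n1 w + n1 n) <= t * N) by (unfold N; nra). lra. }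
  assert (P00 : P 0 0 = x) by apply Pab00.
  assert (Ea : forall al be al' be', Rabs al <= 2 * t -> Rabs be <= 2 * t ->
            Rabs al' <= 2 * t -> Rabs be' <= 2 * t ->
            Rabs (a (P al be) - a (P al' be') - (be - be')) <= (Rabs (al - al') + Rabs (be - be')) / 8).
  { intros. pose proof (est_Pab a la x w n eps da al be al' be' Ha (Rlt_le _ _ Heps)
         (BX _ _ _ H H0 Hma) (BX _ _ _ H1 H2 Hma)).
    rewrite Ln, Lw in H3. replace ((al - al') * 0 + (be - be') * 1) with (be - be') in H3 by ring.
    eapply Rle_trans; [apply H3|].
    pose proof (Rabs_pos (al - al')). pose proof (Rabs_pos (be - be')).
    assert (eps * (Rabs (al - al') * n1 w + Rabs (be - be') * n1 n) <= eps * N * (Rabs (al - al') + Rabs (be - be'))).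
    { unfold N. apply aux_le; auto; lra. }
    rewrite HepsN in H6. lra. }
  assert (Eb : forall al be al' be', Rabs al <= 2 * t -> Rabs be <= 2 * t ->
            Rabs al' <= 2 * t -> Rabs be' <= 2 * t ->
            Rabs (b (P al be) - b (P al' be') - (al - al')) <= (Rabs (al - al') + Rabs (be - be')) / 8).
  { intros. pose proof (est_Pab b lb x w n eps db al be al' be' Hb (Rlt_le _ _ Heps)
         (BX _ _ _ H H0 Hmb) (BX _ _ _ H1 H2 Hmb)).
    rewrite Mn, Mw in H3. replace ((al - al') * 1 + (be - be') * 0) with (al - al') in H3 by ring.
    eapply Rle_trans; [apply H3|].
    pose proof (Rabs_pos (al - al')). pose proof (Rabs_pos (be - be')).
    assert (eps * (Rabs (al - al') * n1 w + Rabs (be - be') * n1 n) <= eps * N * (Rabs (al - al') + Rabs (be - be'))).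
    { unfold N. apply aux_le; auto; lra. }
    rewrite HepsN in H6. lra. }
  assert (R0 : Rabs 0 <= 2 * t) by (rewrite Rabs_R0; lra).
  assert (Rt : Rabs t <= 2 * t) by (rewrite Rabs_pos_eq; lra).
  assert (Rmt : Rabs (- t) <= 2 * t) by (rewrite Rabs_Ropp, Rabs_pos_eq; lra).
  assert (A1 : 0 < a (P t t)).
  { pose proof (Ea t t 0 0 Rt Rt R0 R0). rewrite P00, ax in H.
    rewrite !Rminus_0_r, (Rabs_pos_eq t) in H by lra. apply Rabs_le_between in H. lra. }
  assert (A2 : a (P t (- t)) < 0).
  { pose proof (Ea t (-t) 0 0 Rt Rmt R0 R0). rewrite P00, ax in H.
    rewrite !Rminus_0_r, Rabs_Ropp, (Rabs_pos_eq t) in H by lra. apply Rabs_le_between in H. lra. }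
  assert (Hlt : - t < t) by lra.
  destruct (IVT (fun s => a (P t s)) (- t) t
              (cont2_line a (fst x + t * fst w) (snd x + t * snd w) (fst n) (snd n) Ca)
              Hlt A2 A1) as [s0 [Hs0 Hay]].
  simpl in Hay.
  assert (Rs0 : Rabs s0 <= t) by (apply Rabs_le; lra).
  assert (By : 3 * t / 4 <= b (P t s0)).
  { pose proof (Eb t s0 0 0 Rt ltac:(lra) R0 R0). rewrite P00, bx in H.
    rewrite !Rminus_0_r, (Rabs_pos_eq t) in H by lra. apply Rabs_le_between in H. lra. }
  exists (P t s0). split; [split|].
  - unfold dist2. apply vnorm_pos. intro H0.
    assert (dot lb (vsub (P t s0) x) = t).
    { rewrite <- P00. unfold P. rewrite vsub_Pab. 
      replace (dot lb ((t - 0) * fst w + (s0 - 0) * fst n, (t - 0) * snd w + (s0 - 0) * snd n))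
        with (t * dot lb w + s0 * dot lb n) by (unfold dot; simpl; ring).
      rewrite Mn, Mw. ring. }
    rewrite H0 in H. unfold dot in H; simpl in H. lra.
  - unfold dist2. eapply Rle_lt_trans. apply vnorm_le_n1.
    fold (n1 (vsub (P t s0) x)). rewrite <- P00. eapply Rle_lt_trans. apply n1_Pab.
    rewrite !Rminus_0_r, Rabs_pos_eq by lra.
    assert (Rabs s0 * n1 n <= t * n1 n) by nra.
    assert (t * (n1 w + n1 n) <= t * N) by (unfold N; nra). lra.
  - intros e' He'.
    set (sg := Rmin t (e' / N) / 2).
    assert (Hsg : 0 < sg) by (unfold sg; assert (0 < Rmin t (e' / N)) by (apply Rmin_glb_lt; auto; apply Rdiv_lt_0_compat; lra); lra).
    assert (Hsg1 : sg <= t / 2) by (unfold sg; pose proof (Rmin_l t (e'/N)); lra).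
    assert (Hsg2 : sg * N <= e' / 2).
    { unfold sg. pose proof (Rmin_r t (e'/N)).
      assert (Rmin t (e'/N) * N <= e' / N * N) by nra.
      replace (e' / N * N) with e' in H0 by (field; lra). lra. }
    assert (Rp : Rabs (s0 + sg) <= 2 * t) by (apply Rabs_le; apply Rabs_le_between in Rs0; lra).
    assert (Rm : Rabs (s0 - sg) <= 2 * t) by (apply Rabs_le; apply Rabs_le_between in Rs0; lra).
    assert (Rs0' : Rabs s0 <= 2 * t) by lra.
    assert (DD : forall s, Rabs (s - s0) = sg -> dist2 (P t s) (P t s0) < e').
    { intros s Hs. unfold dist2. eapply Rle_lt_trans. apply vnorm_le_n1.
      fold (n1 (vsub (P t s) (P t s0))). eapply Rle_lt_trans. apply n1_Pab.
      rewrite Rminus_diag, Rabs_R0, Hs.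
      assert (sg * n1 n <= sg * N) by (unfold N; nra). lra. }
    exists (P t (s0 + sg)), (P t (s0 - sg)).
    assert (E1 : Rabs (s0 + sg - s0) = sg) by (replace (s0 + sg - s0) with sg by ring; rewrite Rabs_pos_eq; lra).
    assert (E2 : Rabs (s0 - sg - s0) = sg) by (replace (s0 - sg - s0) with (- sg) by ring; rewrite Rabs_Ropp, Rabs_pos_eq; lra).
    split; [apply DD; auto|]. split; [apply DD; auto|].
    pose proof (Ea t (s0 + sg) t s0 Rt Rp Rt Rs0') as Q1.
    pose proof (Ea t (s0 - sg) t s0 Rt Rm Rt Rs0') as Q2.
    pose proof (Eb t (s0 + sg) t s0 Rt Rp Rt Rs0') as Q3.
    pose proof (Eb t (s0 - sg) t s0 Rt Rm Rt Rs0') as Q4.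
    rewrite Rminus_diag, Rabs_R0 in Q1, Q2, Q3, Q4. rewrite E1 in Q1, Q3. rewrite E2 in Q2, Q4.
    rewrite Hay in Q1, Q2.
    apply Rabs_le_between in Q1. apply Rabs_le_between in Q2. apply Rabs_le_between in Q3. apply Rabs_le_between in Q4.
    repeat split; lra.
Qed.


Lemma dot_vsub l u d : dot l d = dot l u - dot l (vsub u d).
Proof. unfold dot, vsub; simpl; ring. Qed.

Lemma dot_vscale l c v : dot l (vscale c v) = c * dot l v.
Proof. unfold dot, vscale; simpl; ring. Qed.

Lemma sqrt1 : vnorm (1, 0) = 1.
Proof. unfold vnorm, dot; simpl. replace (1*1+0*0) with 1 by ring. apply sqrt_1. Qed.

Lemma vnorm_of_dot1 v : dot v v = 1 -> vnorm v = 1.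
Proof. intro H. unfold vnorm. rewrite H. apply sqrt_1. Qed.

Lemma unit_dot w : w <> (0,0) -> dot (vscale (/ vnorm w) w) (vscale (/ vnorm w) w) = 1.
Proof.
  intro H. pose proof (vnorm_pos w H). pose proof (vnorm_sq w).
  unfold dot, vscale in *; simpl in *.
  replace (/ vnorm w * fst w * (/ vnorm w * fst w) + / vnorm w * snd w * (/ vnorm w * snd w))
    with ((fst w * fst w + snd w * snd w) / (vnorm w * vnorm w)) by (field; lra).
  rewrite <- H1. field. lra.
Qed.

Lemma cross_ne0_l la lb : cross la lb <> 0 -> la <> (0,0).
Proof. intros H E. apply H. rewrite E. unfold cross; simpl; ring. Qed.

Lemma ulin_est a x la eps del y :
  (forall p q, box x del p -> box x del q ->
      Rabs (a q - a p - dot la (vsub q p)) <= eps * n1 (vsub q p)) -> 0 <= eps ->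
  0 < del -> dist2 y x < del -> 0 < dist2 y x ->
  Rabs (dot la (vscale (/ dist2 y x) (vsub y x)) - (a y - a x) / dist2 y x) <= 2 * eps.
Proof.
  intros H He Hd Hy Hy0.
  specialize (H x y (box_self x del Hd) (dist_box _ _ _ Hy)).
  rewrite dot_vscale.
  replace (/ dist2 y x * dot la (vsub y x) - (a y - a x) / dist2 y x)
    with (- (a y - a x - dot la (vsub y x)) / dist2 y x) by (field; lra).
  unfold Rdiv. rewrite Rabs_mult, Rabs_Ropp, Rabs_inv, (Rabs_pos_eq (dist2 y x)) by lra.
  pose proof (n1_le2 (vsub y x)). fold (dist2 y x) in H0.
  apply (Rmult_le_reg_r (dist2 y x)); auto. rewrite Rmult_assoc, Rinv_l by lra.
  nra.
Qed.

Lemma ht_dir (S : pt -> Prop) a b x la lb d :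
  ulin a x la -> ulin b x lb -> a x = 0 -> b x = 0 ->
  (forall y, S y -> a y = 0 /\ 0 <= b y) -> cross la lb <> 0 ->
  is_half_tangent S x d -> dot la d = 0 /\ 0 < dot lb d.
Proof.
  intros Ua Ub ax bx HS HD [Hd1 [Hacc Hlim]].
  assert (K : forall eta, 0 < eta -> Rabs (dot la d) <= eta /\ - eta <= dot lb d).
  { intros eta Heta.
    set (L := n1 la + n1 lb + 1).
    assert (HL : 0 < L) by (unfold L; pose proof (n1_ge0 la); pose proof (n1_ge0 lb); lra).
    destruct (Ua (eta / 4)) as [da [Hda Ha]]; [lra|].
    destruct (Ub (eta / 4)) as [db [Hdb Hb]]; [lra|].
    destruct (Hlim (eta / (2 * L))) as [dl [Hdl Hl]]. { apply Rdiv_lt_0_compat; lra. }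
    destruct (Hacc (Rmin dl (Rmin da db))) as [y [Sy [Hy0 Hy1]]].
    { repeat apply Rmin_glb_lt; auto. }
    assert (Y1 : dist2 y x < dl) by (eapply Rlt_le_trans; [apply Hy1|apply Rmin_l]).
    assert (Y2 : dist2 y x < Rmin da db) by (eapply Rlt_le_trans; [apply Hy1|apply Rmin_r]).
    assert (Y3 : dist2 y x < da) by (eapply Rlt_le_trans; [apply Y2|apply Rmin_l]).
    assert (Y4 : dist2 y x < db) by (eapply Rlt_le_trans; [apply Y2|apply Rmin_r]).
    destruct (HS y Sy) as [ay by0].
    pose proof (ulin_est a x la (eta/4) da y Ha ltac:(lra) Hda Y3 Hy0) as Ea.
    pose proof (ulin_est b x lb (eta/4) db y Hb ltac:(lra) Hdb Y4 Hy0) as Eb.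
    rewrite ay, ax in Ea. rewrite bx in Eb.
    replace ((0 - 0) / dist2 y x) with 0 in Ea by (field; lra). rewrite Rminus_0_r in Ea, Eb.
    assert (0 <= b y / dist2 y x) by (apply Rdiv_le_0_compat; lra).
    specialize (Hl y Sy (conj Hy0 Y1)).
    set (u := vscale (/ dist2 y x) (vsub y x)) in *.
    pose proof (dot_le la (vsub u d)). pose proof (dot_le lb (vsub u d)).
    fold (n1 la) in H0. fold (n1 lb) in H1. unfold dist2 in Hl at 1.
    pose proof (vnorm_ge0 (vsub u d)).
    assert (n1 la * vnorm (vsub u d) <= L * (eta / (2 * L))).
    { apply Rmult_le_compat; auto. apply n1_ge0. unfold L; pose proof (n1_ge0 lb); lra. lra. }
    assert (n1 lb * vnorm (vsub u d) <= L * (eta / (2 * L))).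
    { apply Rmult_le_compat; auto. apply n1_ge0. unfold L; pose proof (n1_ge0 la); lra. lra. }
    replace (L * (eta / (2 * L))) with (eta / 2) in H3, H4 by (field; lra).
    rewrite (dot_vsub la u d), (dot_vsub lb u d).
    apply Rabs_le_between in Ea. apply Rabs_le_between in Eb.
    apply Rabs_le_between in H0. apply Rabs_le_between in H1.
    split; [apply Rabs_le|]; lra. }
  assert (Z : dot la d = 0).
  { apply small_zero. intros eta He. apply K; auto. }
  assert (P : 0 <= dot lb d).
  { destruct (Rle_lt_dec 0 (dot lb d)) as [h|h]; auto.
    destruct (K (- dot lb d / 2)) as [_ h']; lra. }
  split; auto. destruct P as [P|P]; auto. exfalso.
  pose proof (vnorm_eq1 _ Hd1).
  unfold dot, cross in *. destruct la as [l1 l2]; destruct lb as [m1 m2]; destruct d as [d1 d2]; simpl in *.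
  assert ((l1 * m2 - l2 * m1) * d1 = 0).
  { replace ((l1 * m2 - l2 * m1) * d1) with (m2 * (l1 * d1 + l2 * d2) - l2 * (m1 * d1 + m2 * d2)) by ring.
    rewrite Z, <- P. ring. }
  assert ((l1 * m2 - l2 * m1) * d2 = 0).
  { replace ((l1 * m2 - l2 * m1) * d2) with (l1 * (m1 * d1 + m2 * d2) - m1 * (l1 * d1 + l2 * d2)) by ring.
    rewrite Z, <- P. ring. }
  apply Rmult_integral in H0. apply Rmult_integral in H1.
  destruct H0 as [|E1]; [contradiction|]. destruct H1 as [|E2]; [contradiction|].
  subst. lra.
Qed.


Definition wv (la lb : pt) : pt := (cross la lb * - snd la, cross la lb * fst la).
Definition dn (la lb : pt) : pt := vscale (/ vnorm (wv la lb)) (wv la lb).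

Lemma dot_la_pos la : la <> (0,0) -> 0 < dot la la.
Proof.
  intro H. pose proof (vnorm_pos la H). rewrite <- vnorm_sq. nra.
Qed.

Lemma wv_ne0 la lb : cross la lb <> 0 -> wv la lb <> (0,0).
Proof.
  intros HD E. pose proof (dot_la_pos la (cross_ne0_l _ _ HD)).
  unfold wv in E. injection E. intros E2 E1.
  apply Rmult_integral in E1. apply Rmult_integral in E2.
  unfold dot in H. destruct E1 as [|E1]; [contradiction|]. destruct E2 as [|E2]; [contradiction|].
  nra.
Qed.

Lemma vnorm_wv la lb : vnorm (wv la lb) = Rabs (cross la lb) * sqrt (dot la la).
Proof.
  unfold vnorm. replace (dot (wv la lb) (wv la lb)) with (Rsqr (cross la lb) * dot la la)
    by (unfold wv, dot, Rsqr; simpl; ring).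
  rewrite sqrt_mult_alt by apply Rle_0_sqr. rewrite sqrt_Rsqr_abs. reflexivity.
Qed.

Lemma dn_unit la lb : cross la lb <> 0 -> vnorm (dn la lb) = 1.
Proof. intro H. apply vnorm_of_dot1. apply unit_dot. apply wv_ne0; auto. Qed.

Lemma dir_close la lb : cross la lb <> 0 -> forall eta, 0 < eta -> exists eps, 0 < eps /\
  forall u, dot u u = 1 -> Rabs (dot la u) <= eps -> - eps <= dot lb u ->
  vnorm (vsub u (dn la lb)) < eta.
Proof.
  intros HD eta Heta.
  set (De := cross la lb) in *.
  set (A := dot la la). assert (HA : 0 < A) by (apply dot_la_pos; apply (cross_ne0_l la lb); auto).
  set (sA := sqrt A). assert (HsA : 0 < sA) by (apply sqrt_lt_R0; auto).
  assert (HsA2 : sA * sA = A) by (apply sqrt_sqrt; lra).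
  set (p := dot la lb).
  assert (HaD : 0 < Rabs De) by (apply Rabs_pos_lt; auto).
  pose proof (Rabs_pos p) as Hp.
  set (e2 := Rabs De * sA / (2 * (A + Rabs p + 1))).
  assert (He2 : 0 < e2) by (unfold e2; apply Rdiv_lt_0_compat; nra).
  exists (Rmin (sA / 2) (Rmin e2 (eta * sA / 2))).
  assert (Hm1 := Rmin_l (sA / 2) (Rmin e2 (eta * sA / 2))).
  assert (Hm2 := Rmin_r (sA / 2) (Rmin e2 (eta * sA / 2))).
  assert (Hm3 := Rmin_l e2 (eta * sA / 2)). assert (Hm4 := Rmin_r e2 (eta * sA / 2)).
  set (eps := Rmin (sA / 2) (Rmin e2 (eta * sA / 2))) in *.
  assert (Heps : 0 < eps) by (unfold eps; repeat apply Rmin_glb_lt; nra).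
  split; auto.
  intros u Hu HP HQ.
  set (P := dot la u). set (Q := cross la u).
  assert (I1 : P * P + Q * Q = A).
  { unfold P, Q, A. rewrite <- (Rmult_1_r (dot la la)), <- Hu. unfold dot, cross; ring. }
  assert (I2 : dot lb u * A = p * P + De * Q).
  { unfold P, Q, A, p, De. unfold dot, cross; ring. }
  set (Y := De * Q / Rabs De).
  assert (I3 : Y * Y = Q * Q).
  { unfold Y. replace (De * Q / Rabs De * (De * Q / Rabs De)) with ((De * De) * (Q * Q) / (Rabs De * Rabs De)) by (field; lra).
    rewrite <- Rabs_mult, Rabs_pos_eq by nra. field. nra. }
  assert (I4 : Rabs De * Y = De * Q) by (unfold Y; field; lra).
  assert (I5 : dot (vsub u (dn la lb)) (vsub u (dn la lb)) = 2 - 2 * Y / sA).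
  { assert (Dd := unit_dot _ (wv_ne0 _ _ HD)). fold (dn la lb) in Dd.
    assert (E1 : dot (vsub u (dn la lb)) (vsub u (dn la lb)) = dot u u - 2 * dot u (dn la lb) + dot (dn la lb) (dn la lb))
      by (unfold dot, vsub; simpl; ring).
    assert (E2 : dot u (dn la lb) = / vnorm (wv la lb) * (De * Q)).
    { unfold dn. rewrite dot_vscale. f_equal. unfold dot, wv, Q, De, cross; simpl; ring. }
    rewrite E1, E2, Dd, Hu, vnorm_wv. fold De A sA.
    rewrite <- I4. field. lra. }
  assert (PP : P * P <= eps * eps).
  { assert (P * P = Rabs P * Rabs P) by (rewrite <- Rabs_mult, Rabs_pos_eq; nra).
    pose proof (Rabs_pos P). fold P in HP. nra. }
  assert (EE : eps * eps <= A / 4) by nra.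
  assert (YY : 3 * A / 4 <= Y * Y) by lra.
  assert (DQ : - eps * (A + Rabs p) <= De * Q).
  { assert (- (Rabs p * eps) <= - (p * P)).
    { apply Ropp_le_contravar. eapply Rle_trans; [apply Rle_abs|]. rewrite Rabs_mult.
      apply Rmult_le_compat_l; auto. }
    assert (- eps * A <= dot lb u * A) by nra. lra. }
  assert (E2b : eps * (A + Rabs p + 1) <= Rabs De * sA / 2).
  { assert (eps * (A + Rabs p + 1) <= e2 * (A + Rabs p + 1)) by (apply Rmult_le_compat_r; lra).
    unfold e2 in H. replace (Rabs De * sA / (2 * (A + Rabs p + 1)) * (A + Rabs p + 1)) with (Rabs De * sA / 2) in H by (field; lra).
    auto. }
  assert (Ylow : - (sA / 2) < Y).
  { assert (Rabs De * (- (sA / 2)) < Rabs De * Y) by (rewrite I4; nra).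
    apply Rmult_lt_reg_l in H; auto. }
  assert (Ypos : 0 < Y).
  { destruct (Rlt_le_dec 0 Y) as [h|h]; auto. exfalso.
    assert (Y * Y < sA / 2 * (sA / 2)) by nra. nra. }
  assert (YA : Y * Y <= A) by nra.
  assert (Yle : Y <= sA) by nra.
  assert (Ylow2 : A - eps * eps <= Y * sA) by nra.
  assert (Fin : 2 - 2 * Y / sA < eta * eta).
  { replace (2 - 2 * Y / sA) with (2 * (A - Y * sA) / A) by (rewrite <- HsA2; field; lra).
    assert (eps * eps <= eta * eta * A / 4) by (rewrite <- HsA2; nra).
    apply (Rmult_lt_reg_r A); auto. unfold Rdiv. rewrite Rmult_assoc, Rinv_l by lra. nra. }
  rewrite <- I5 in Fin. rewrite <- vnorm_sq in Fin.
  pose proof (vnorm_ge0 (vsub u (dn la lb))). nra.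
Qed.


Lemma ht_exist (S : pt -> Prop) a b x la lb :
  cont2 a -> ulin a x la -> ulin b x lb -> a x = 0 -> b x = 0 -> cross la lb <> 0 ->
  (forall y, S y -> a y = 0 /\ 0 <= b y) ->
  (exists r, 0 < r /\ forall y, dist2 y x < r -> sc a b y -> S y) ->
  is_half_tangent S x (dn la lb).
Proof.
  intros Ca Ua Ub ax bx HD HS [r [Hr HR]].
  split; [apply dn_unit; auto|]. split.
  - intros e He. destruct (curve_pts a b x la lb Ca Ua Ub ax bx HD (Rmin e r)) as [y [[H0 H1] Hsc]].
    { apply Rmin_glb_lt; auto. }
    exists y. split.
    + apply HR; auto. eapply Rlt_le_trans; [apply H1|apply Rmin_r].
    + split; auto. eapply Rlt_le_trans; [apply H1|apply Rmin_l].
  - intros eta Heta. destruct (dir_close la lb HD eta Heta) as [eps [Heps Hc]].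
    destruct (Ua (eps / 2)) as [da [Hda Ha]]; [lra|].
    destruct (Ub (eps / 2)) as [db [Hdb Hb]]; [lra|].
    exists (Rmin da db). split; [apply Rmin_glb_lt; auto|].
    intros y Sy [Hy0 Hy1].
    assert (Y3 : dist2 y x < da) by (eapply Rlt_le_trans; [apply Hy1|apply Rmin_l]).
    assert (Y4 : dist2 y x < db) by (eapply Rlt_le_trans; [apply Hy1|apply Rmin_r]).
    destruct (HS y Sy) as [ay by0].
    pose proof (ulin_est a x la (eps/2) da y Ha ltac:(lra) Hda Y3 Hy0) as Ea.
    pose proof (ulin_est b x lb (eps/2) db y Hb ltac:(lra) Hdb Y4 Hy0) as Eb.
    rewrite ay, ax in Ea. rewrite bx in Eb.
    replace ((0 - 0) / dist2 y x) with 0 in Ea by (field; lra). rewrite Rminus_0_r in Ea, Eb.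
    assert (0 <= b y / dist2 y x) by (apply Rdiv_le_0_compat; lra).
    apply Rabs_le_between in Eb.
    unfold dist2 at 1. apply Hc.
    + pose proof (vnorm_sq (vsub y x)). fold (dist2 y x) in H0.
      replace (dot (vscale (/ dist2 y x) (vsub y x)) (vscale (/ dist2 y x) (vsub y x)))
        with (/ dist2 y x * / dist2 y x * dot (vsub y x) (vsub y x)) by (unfold dot, vscale; simpl; ring).
      rewrite <- H0. field. lra.
    + lra.
    + lra.
Qed.


Lemma perp l m d : l <> (0,0) -> dot l d = 0 -> dot d d = 1 -> 0 < dot m d ->
  exists t, d = (t * - snd l, t * fst l) /\ t * t * dot l l = 1 /\ 0 < t * cross l m.
Proof.
  intros Hl H0 H1 Hm. pose proof (dot_la_pos l Hl) as Hp.
  exists (cross l d / dot l l).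
  assert (Ed : d = (cross l d / dot l l * - snd l, cross l d / dot l l * fst l)).
  { destruct l as [l1 l2], d as [d1 d2]. unfold dot, cross in *; simpl in *.
    f_equal.
    - apply (Rmult_eq_reg_r (l1 * l1 + l2 * l2)); [|lra].
      replace (l1 * d2 - l2 * d1) with (l1 * d2 - l2 * d1) by ring.
      field_simplify; [|lra].
      replace (d1 * l1 ^ 2 + d1 * l2 ^ 2) with (l1 * (l1 * d1 + l2 * d2) + (- l2) * (l1 * d2 - l2 * d1)) by ring.
      rewrite H0. ring.
    - apply (Rmult_eq_reg_r (l1 * l1 + l2 * l2)); [|lra].
      field_simplify; [|lra].
      replace (d2 * l1 ^ 2 + d2 * l2 ^ 2) with (l2 * (l1 * d1 + l2 * d2) + l1 * (l1 * d2 - l2 * d1)) by ring.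
      rewrite H0. ring. }
  split; auto. set (t := cross l d / dot l l) in *. clearbody t. subst d.
  destruct l as [l1 l2], m as [m1 m2]. unfold dot, cross in *; simpl in *. split.
  - rewrite <- H1. ring.
  - replace (t * (l1 * m2 - l2 * m1)) with (m1 * (t * - l2) + m2 * (t * l1)) by ring. auto.
Qed.

Lemma tval t l D : l <> (0,0) -> t * t * dot l l = 1 -> 0 < t * D ->
  (0 < D -> t = / vnorm l) /\ (D < 0 -> t = - / vnorm l).
Proof.
  intros Hl H1 H2. pose proof (vnorm_pos l Hl). rewrite <- vnorm_sq in H1.
  assert (E : (t * vnorm l - 1) * (t * vnorm l + 1) = 0) by nra.
  apply Rmult_integral in E.
  split; intro HD.
  - assert (0 < t) by nra. destruct E as [E|E].
    + apply (Rmult_eq_reg_r (vnorm l)); [|lra]. rewrite Rinv_l by lra. lra.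
    + nra.
  - assert (t < 0) by nra. destruct E as [E|E].
    + nra.
    + apply (Rmult_eq_reg_r (vnorm l)); [|lra]. rewrite Ropp_mult_distr_l_reverse, Rinv_l by lra. lra.
Qed.

Lemma acos_eq th c : 0 <= th <= PI -> cos th = c -> th = acos c.
Proof. intros H E. rewrite <- E, acos_cos; auto. Qed.

Lemma range_pi th : 0 <= th <= 2 * PI -> 0 < sin th -> 0 <= th <= PI.
Proof.
  intros [H1 H2] Hs. split; auto. destruct (Rle_lt_dec th PI) as [h|h]; auto.
  destruct H2 as [H2|H2].
  - pose proof (sin_lt_0 th h H2). lra.
  - subst. rewrite sin_2PI in Hs. lra.
Qed.

Lemma vnorm_opp v : vnorm (vscale (-1) v) = vnorm v.
Proof. unfold vnorm. f_equal. unfold dot, vscale; simpl; ring. Qed.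

Lemma acos_from th c : 0 <= th <= 2 * PI -> 0 < sin th -> cos th = c -> th = acos c.
Proof. intros. apply acos_eq; auto. apply range_pi; auto. Qed.

Lemma trig_core A1 A2 d01 d12 d02 th0 th1 :
  cross A1 A2 <> 0 -> vnorm d01 = 1 -> vnorm d12 = 1 -> vnorm d02 = 1 ->
  dot A1 d01 = 0 -> 0 < dot A2 d01 ->
  dot (vsub A2 A1) d12 = 0 -> 0 < dot (vscale (-1) A1) d12 ->
  dot A2 d02 = 0 -> 0 < dot A1 d02 ->
  ccw_angle d02 d01 th0 -> ccw_angle d02 d12 th1 ->
  beta th0 th1 0 = acos (dot A1 (vscale (-1) A2) / (vnorm A1 * vnorm (vscale (-1) A2))) /\
  beta th0 th1 1 = acos (dot (vsub A2 A1) A1 / (vnorm (vsub A2 A1) * vnorm A1)) /\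
  beta th0 th1 2 = acos (dot (vscale (-1) A2) (vsub A2 A1) / (vnorm (vscale (-1) A2) * vnorm (vsub A2 A1))).
Proof.
  intros HD U1 U2 U3 P1 Q1 P2 Q2 P3 Q3 [R0 [c0 s0]] [R1 [c1 s1]].
  rewrite !vnorm_opp.
  set (De := cross A1 A2) in *.
  set (C := vsub A2 A1) in *.
  assert (NA1 : A1 <> (0,0)) by (apply (cross_ne0_l A1 A2); auto).
  assert (NA2 : A2 <> (0,0)).
  { apply (cross_ne0_l A2 A1). unfold De, cross in *; intro; apply HD; lra. }
  assert (ECm : cross C (vscale (-1) A1) = De) by (unfold C, De, cross, vsub, vscale; simpl; ring).
  assert (NC : C <> (0,0)) by (apply (cross_ne0_l C (vscale (-1) A1)); rewrite ECm; auto).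
  assert (E21 : cross A2 A1 = - De) by (unfold De, cross; ring).
  destruct (perp A1 A2 d01 NA1 P1 (vnorm_eq1 _ U1) Q1) as [t1 [Ed1 [N1 S1]]].
  destruct (perp C (vscale (-1) A1) d12 NC P2 (vnorm_eq1 _ U2) Q2) as [t3 [Ed3 [N3 S3]]].
  destruct (perp A2 A1 d02 NA2 P3 (vnorm_eq1 _ U3) Q3) as [t2 [Ed2 [N2 S2]]].
  rewrite ECm in S3. rewrite E21 in S2. fold De in S1.
  pose proof (vnorm_pos _ NA1) as HnA1. pose proof (vnorm_pos _ NA2) as HnA2.
  pose proof (vnorm_pos _ NC) as HnC.
  assert (c0' : cos th0 = t1 * t2 * dot A1 A2) by (rewrite c0, Ed1, Ed2; unfold dot; simpl; ring).
  assert (s0' : sin th0 = - (t1 * t2) * De) by (rewrite s0, Ed1, Ed2; unfold De, cross; simpl; ring).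
  assert (c1' : cos th1 = t2 * t3 * dot A2 C) by (rewrite c1, Ed3, Ed2; unfold dot; simpl; ring).
  assert (s1' : sin th1 = t2 * t3 * De).
  { rewrite s1, Ed3, Ed2; unfold De, C, cross, vsub; simpl; ring. }
  assert (cd : cos th1 * cos th0 + sin th1 * sin th0 = t1 * t3 * dot A1 C).
  { rewrite c0', s0', c1', s1'.
    transitivity (t1 * t3 * (t2 * t2 * dot A2 A2) * dot A1 C); [|rewrite N2; ring].
    unfold De, C, dot, cross, vsub; simpl; ring. }
  assert (sd : sin th1 * cos th0 - cos th1 * sin th0 = t1 * t3 * De).
  { rewrite c0', s0', c1', s1'.
    transitivity (t1 * t3 * (t2 * t2 * dot A2 A2) * De); [|rewrite N2; ring].
    unfold De, C, dot, cross, vsub; simpl; ring. }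
  assert (HDc : 0 < De \/ De < 0) by (destruct (Rtotal_order De 0) as [h|[h|h]]; auto; contradiction).
  assert (Pr : t1 * t2 = - / (vnorm A1 * vnorm A2) /\ t2 * t3 = - / (vnorm A2 * vnorm C)
               /\ t1 * t3 = / (vnorm A1 * vnorm C)).
  { destruct (tval t1 A1 De NA1 N1 S1) as [T1a T1b].
    destruct (tval t2 A2 (- De) NA2 N2 S2) as [T2a T2b].
    destruct (tval t3 C De NC N3 S3) as [T3a T3b].
    destruct HDc as [h|h].
    - rewrite (T1a h), (T2b ltac:(lra)), (T3a h). repeat split; field; lra.
    - rewrite (T1b h), (T2a ltac:(lra)), (T3b h). repeat split; field; lra. }
  destruct Pr as [p12 [p23 p13]].
  assert (F0 : t1 * t2 * dot A1 A2 = dot A1 (vscale (-1) A2) / (vnorm A1 * vnorm A2)).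
  { rewrite p12. unfold dot, vscale; simpl. field. lra. }
  assert (F1 : t1 * t3 * dot A1 C = dot C A1 / (vnorm C * vnorm A1)).
  { rewrite p13. unfold dot; simpl. field. lra. }
  assert (F2 : t2 * t3 * dot A2 C = dot (vscale (-1) A2) C / (vnorm A2 * vnorm C)).
  { rewrite p23. unfold dot, vscale; simpl. field. lra. }
  pose proof PI_RGT_0 as HPI.
  destruct HDc as [h|h].
  - assert (t1 > 0) by nra. assert (t3 > 0) by nra. assert (t2 < 0) by nra.
    assert (Ss0 : 0 < sin th0) by (rewrite s0'; nra).
    assert (Ss1 : sin th1 < 0) by (rewrite s1'; nra).
    assert (Ssd : 0 < sin th1 * cos th0 - cos th1 * sin th0) by (rewrite sd; nra).
    assert (Hth0 : th0 <= PI) by (apply (range_pi th0); lra).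
    assert (Hth1 : PI < th1).
    { destruct (Rle_lt_dec th1 PI) as [h'|h']; auto. pose proof (sin_ge_0 th1 ltac:(lra) h'). lra. }
    unfold beta. destruct (Rle_dec th0 th1) as [_|n]; [|lra].
    split; [|split].
    + apply acos_from; [lra|auto|]. rewrite c0'; auto.
    + apply acos_from; [lra| rewrite sin_minus; auto |]. rewrite cos_minus, cd; auto.
    + apply acos_from; [lra| rewrite sin_minus, sin_2PI, cos_2PI; lra |].
      rewrite cos_minus, sin_2PI, cos_2PI, c1'. rewrite <- F2. ring.
  - assert (t1 < 0) by nra. assert (t3 < 0) by nra. assert (t2 > 0) by nra.
    assert (Ss0 : sin th0 < 0) by (rewrite s0'; nra).
    assert (Ss1 : 0 < sin th1) by (rewrite s1'; nra).
    assert (Ssd : sin th1 * cos th0 - cos th1 * sin th0 < 0) by (rewrite sd; nra).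
    assert (Hth1 : th1 <= PI) by (apply (range_pi th1); lra).
    assert (Hth0 : PI < th0).
    { destruct (Rle_lt_dec th0 PI) as [h'|h']; auto. pose proof (sin_ge_0 th0 ltac:(lra) h'). lra. }
    unfold beta. destruct (Rle_dec th0 th1) as [n|_]; [lra|].
    split; [|split].
    + apply acos_from; [lra| rewrite sin_minus, sin_2PI, cos_2PI; lra |].
      rewrite cos_minus, sin_2PI, cos_2PI, c0'. rewrite <- F0. ring.
    + apply acos_from; [lra| rewrite sin_minus; lra |]. rewrite cos_minus, <- F1, <- cd. ring.
    + apply acos_from; [lra|auto|]. rewrite c1'; auto.
Qed.


Lemma vsub_shift a b c : vsub c b = vsub (vsub c a) (vsub b a).
Proof. unfold vsub; simpl; f_equal; ring. Qed.
Lemma vsub_swap a b : vsub a b = vscale (-1) (vsub b a).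
Proof. unfold vsub, vscale; simpl; f_equal; ring. Qed.

Theorem proposition5p2
  (D : pt -> Prop) (phi : nat -> pt -> R) (xh : pt)
  (HDopen : is_open D) (HDbdd : is_bounded D)
  (Hsmooth : forall j, (j < 3)%nat -> smooth (phi j))
  (Hphi0 : forall p, phi 0%nat p = 0)
  (HxD : D xh)
  (HxE : E D phi (0 :: 1 :: 2 :: nil)%nat xh)
  (Hinv : let g1 := grad (phidiff phi 0 1) xh in
          let g2 := grad (phidiff phi 0 2) xh in
          fst g1 * snd g2 - snd g1 * fst g2 <> 0) :
  (exists d01 d12 d02,
      is_half_tangent (E D phi (0 :: 1 :: nil)%nat) xh d01 /\
      is_half_tangent (E D phi (1 :: 2 :: nil)%nat) xh d12 /\
      is_half_tangent (E D phi (0 :: 2 :: nil)%nat) xh d02) /\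
  (forall d01 d12 d02 th0 th1,
      is_half_tangent (E D phi (0 :: 1 :: nil)%nat) xh d01 ->
      is_half_tangent (E D phi (1 :: 2 :: nil)%nat) xh d12 ->
      is_half_tangent (E D phi (0 :: 2 :: nil)%nat) xh d02 ->
      ccw_angle d02 d01 th0 -> ccw_angle d02 d12 th1 ->
      forall k, (k < 3)%nat -> beta th0 th1 k = angle_formula phi xh k).
Proof.
  assert (HC : forall k, (k < 3)%nat -> cont2 (phi k)).
  { intros k Hk. exact (proj1 (Hsmooth k Hk 1%nat)). }
  assert (HG : forall k, (k < 3)%nat -> exists l, ulin (phi k) xh l).
  { intros k Hk. destruct (Hsmooth k Hk 1%nat) as [_ [g1 [g2 [H1 [H2 [H3 H4]]]]]].
    exists (g1 xh, g2 xh). apply ulin_of_C1; auto. }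
  destruct (HG 0%nat ltac:(lia)) as [G0 U0].
  destruct (HG 1%nat ltac:(lia)) as [G1 U1].
  destruct (HG 2%nat ltac:(lia)) as [G2 U2].
  assert (UL : forall i j Gi Gj, ulin (phi i) xh Gi -> ulin (phi j) xh Gj ->
             ulin (phidiff phi i j) xh (vsub Gi Gj)).
  { intros. unfold phidiff. apply ulin_sub; auto. }
  assert (CD : forall i j, (i < 3)%nat -> (j < 3)%nat -> cont2 (phidiff phi i j)).
  { intros. unfold phidiff. apply cont2_sub; auto. }
  assert (Heq : forall j m, (j < 3)%nat -> (m < 3)%nat -> phi j xh <= phi m xh).
  { intros j m Hj Hm. apply closure_le with D; auto.
    assert (In j (0 :: 1 :: 2 :: nil)%nat) by (simpl; lia).
    apply (HxE j H). }
  assert (Z : forall i j, (i < 3)%nat -> (j < 3)%nat -> phidiff phi i j xh = 0).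
  { intros i j Hi Hj. unfold phidiff. pose proof (Heq i j Hi Hj). pose proof (Heq j i Hj Hi). lra. }
  set (De := cross (vsub G1 G0) (vsub G2 G0)).
  assert (HDe : De <> 0).
  { intro H. apply Hinv. cbv zeta.
    rewrite (ulin_grad _ _ _ (UL 0%nat 1%nat G0 G1 U0 U1)), (ulin_grad _ _ _ (UL 0%nat 2%nat G0 G2 U0 U2)).
    rewrite <- H. unfold De, cross, vsub; simpl; ring. }
  assert (X01 : cross (vsub G1 G0) (vsub G2 G0) <> 0) by auto.
  assert (X12 : cross (vsub G2 G1) (vsub G0 G1) <> 0).
  { intro H; apply HDe; rewrite <- H; unfold De, cross, vsub; simpl; ring. }
  assert (X02 : cross (vsub G2 G0) (vsub G1 G0) <> 0).
  { intro H; apply HDe. replace De with (- cross (vsub G2 G0) (vsub G1 G0)) by (unfold De, cross, vsub; simpl; ring).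
    rewrite H; ring. }
  destruct (HDopen xh HxD) as [r [Hr HDx]].
  assert (S01 : forall y, E D phi (0 :: 1 :: nil)%nat y -> phidiff phi 1 0 y = 0 /\ 0 <= phidiff phi 2 0 y).
  { intros y Hy. assert (B0 := proj1 (Hy 0%nat ltac:(simpl; auto))). assert (B1 := proj1 (Hy 1%nat ltac:(simpl; auto))).
    pose proof (closure_le D phi 0 1 y HC ltac:(lia) ltac:(lia) B0).
    pose proof (closure_le D phi 0 2 y HC ltac:(lia) ltac:(lia) B0).
    pose proof (closure_le D phi 1 0 y HC ltac:(lia) ltac:(lia) B1).
    unfold phidiff; lra. }
  assert (S12 : forall y, E D phi (1 :: 2 :: nil)%nat y -> phidiff phi 2 1 y = 0 /\ 0 <= phidiff phi 0 1 y).
  { intros y Hy. assert (B0 := proj1 (Hy 1%nat ltac:(simpl; auto))). assert (B1 := proj1 (Hy 2%nat ltac:(simpl; auto))).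
    pose proof (closure_le D phi 1 0 y HC ltac:(lia) ltac:(lia) B0).
    pose proof (closure_le D phi 1 2 y HC ltac:(lia) ltac:(lia) B0).
    pose proof (closure_le D phi 2 1 y HC ltac:(lia) ltac:(lia) B1).
    unfold phidiff; lra. }
  assert (S02 : forall y, E D phi (0 :: 2 :: nil)%nat y -> phidiff phi 2 0 y = 0 /\ 0 <= phidiff phi 1 0 y).
  { intros y Hy. assert (B0 := proj1 (Hy 0%nat ltac:(simpl; auto))). assert (B1 := proj1 (Hy 2%nat ltac:(simpl; auto))).
    pose proof (closure_le D phi 0 1 y HC ltac:(lia) ltac:(lia) B0).
    pose proof (closure_le D phi 0 2 y HC ltac:(lia) ltac:(lia) B0).
    pose proof (closure_le D phi 2 0 y HC ltac:(lia) ltac:(lia) B1).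
    unfold phidiff; lra. }
  assert (T01 : exists r, 0 < r /\ forall y, dist2 y xh < r -> sc (phidiff phi 1 0) (phidiff phi 2 0) y ->
                   E D phi (0 :: 1 :: nil)%nat y).
  { exists r. split; auto. intros y Hy Hsc.
    apply (E_pair D phi 0 1 (phidiff phi 1 0) (phidiff phi 2 0)); auto; unfold phidiff; intros.
    - destruct m as [|[|[|m]]]; lra || lia.
    - destruct m as [|[|[|m]]]; lra || lia.
    - lra.
    - lra. }
  assert (T12 : exists r, 0 < r /\ forall y, dist2 y xh < r -> sc (phidiff phi 2 1) (phidiff phi 0 1) y ->
                   E D phi (1 :: 2 :: nil)%nat y).
  { exists r. split; auto. intros y Hy Hsc.
    apply (E_pair D phi 1 2 (phidiff phi 2 1) (phidiff phi 0 1)); auto; unfold phidiff; intros.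
    - destruct m as [|[|[|m]]]; lra || lia.
    - destruct m as [|[|[|m]]]; lra || lia.
    - lra.
    - lra. }
  assert (T02 : exists r, 0 < r /\ forall y, dist2 y xh < r -> sc (phidiff phi 2 0) (phidiff phi 1 0) y ->
                   E D phi (0 :: 2 :: nil)%nat y).
  { exists r. split; auto. intros y Hy Hsc.
    apply (E_pair D phi 0 2 (phidiff phi 2 0) (phidiff phi 1 0)); auto; unfold phidiff; intros.
    - destruct m as [|[|[|m]]]; lra || lia.
    - destruct m as [|[|[|m]]]; lra || lia.
    - lra.
    - lra. }
  split.
  - exists (dn (vsub G1 G0) (vsub G2 G0)), (dn (vsub G2 G1) (vsub G0 G1)), (dn (vsub G2 G0) (vsub G1 G0)).
    split; [|split].
    + apply ht_exist with (phidiff phi 1 0) (phidiff phi 2 0); auto.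
    + apply ht_exist with (phidiff phi 2 1) (phidiff phi 0 1); auto.
    + apply ht_exist with (phidiff phi 2 0) (phidiff phi 1 0); auto.
  - intros d01 d12 d02 th0 th1 H01 H12 H02 A0 A1 k Hk.
    destruct (ht_dir _ _ _ _ _ _ _ (UL _ _ _ _ U1 U0) (UL _ _ _ _ U2 U0) (Z 1%nat 0%nat ltac:(lia) ltac:(lia))
               (Z 2%nat 0%nat ltac:(lia) ltac:(lia)) S01 X01 H01) as [P1 Q1].
    destruct (ht_dir _ _ _ _ _ _ _ (UL _ _ _ _ U2 U1) (UL _ _ _ _ U0 U1) (Z 2%nat 1%nat ltac:(lia) ltac:(lia))
               (Z 0%nat 1%nat ltac:(lia) ltac:(lia)) S12 X12 H12) as [P2 Q2].
    destruct (ht_dir _ _ _ _ _ _ _ (UL _ _ _ _ U2 U0) (UL _ _ _ _ U1 U0) (Z 2%nat 0%nat ltac:(lia) ltac:(lia))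
               (Z 1%nat 0%nat ltac:(lia) ltac:(lia)) S02 X02 H02) as [P3 Q3].
    rewrite (vsub_shift G0 G1 G2) in P2. rewrite (vsub_swap G0 G1) in Q2.
    destruct (trig_core (vsub G1 G0) (vsub G2 G0) d01 d12 d02 th0 th1 X01
               (proj1 H01) (proj1 H12) (proj1 H02) P1 Q1 P2 Q2 P3 Q3 A0 A1) as [K0 [K1 K2]].
    unfold angle_formula.
    destruct k as [|[|[|k]]]; [| | |lia].
    + change ((0 + 1) mod 3)%nat with 1%nat. change ((0 + 2) mod 3)%nat with 2%nat.
      rewrite (ulin_grad _ _ _ (UL _ _ _ _ U1 U0)), (ulin_grad _ _ _ (UL _ _ _ _ U0 U2)).
      rewrite (vsub_swap G0 G2). exact K0.
    + change ((1 + 1) mod 3)%nat with 2%nat. change ((1 + 2) mod 3)%nat with 0%nat.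
      rewrite (ulin_grad _ _ _ (UL _ _ _ _ U2 U1)), (ulin_grad _ _ _ (UL _ _ _ _ U1 U0)).
      rewrite (vsub_shift G0 G1 G2). exact K1.
    + change ((2 + 1) mod 3)%nat with 0%nat. change ((2 + 2) mod 3)%nat with 1%nat.
      rewrite (ulin_grad _ _ _ (UL _ _ _ _ U0 U2)), (ulin_grad _ _ _ (UL _ _ _ _ U2 U1)).
      rewrite (vsub_swap G0 G2), (vsub_shift G0 G1 G2). exact K2.
Qed.
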